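(* The function $\mathfrak F$ restricted to $[1,\infty)$ is a uniform continuation of the sequence $F$.
   Context: $F$: $F_1=1,F_2=2,F_{n+2}=F_{n+1}+F_n$; $\phi$ golden ratio; $\mathfrak F(x)=\frac{\phi}{\sqrt5}(\phi^x+\phi^{-x}\cos(\pi x)\phi^{-2})$, so $\mathfrak F(n)=F_n$. For an increasing sequence $H$ of positive integers, a continuous function $h:[1,\infty)\to\mathbb{R}$ is a uniform continuation of $H$ if $h(n)=H_n$ for all $n\in\mathbb{N}$ and the functions $h_n:[0,1]\to[0,1]$, $h_n(p)=\frac{h(n+p)-h(n)}{h(n+1)-h(n)}$, converge uniformly on $[0,1]$ to an increasing continuous function. *)

(* Defs.v *)
From Stdlib Require Import Reals Lra.
From Coquelicot Require Import Coquelicot.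
Open Scope R_scope.

(* The sequence F : F_1 = 1, F_2 = 2, F_{n+2} = F_{n+1} + F_n  (indices n >= 1;
   the value at index 0 is an irrelevant dummy). *)
Fixpoint Fib (n : nat) : nat :=
  match n with
  | O => 1%nat
  | S O => 1%nat
  | S (S O) => 2%nat
  | S (S ((S m) as k) as l) => (Fib l + Fib k)%nat
  end.

Definition phi : R := (1 + sqrt 5) / 2.

Definition frakF (x : R) : R :=
  phi / sqrt 5 * (Rpower phi x + Rpower phi (- x) * cos (PI * x) * / phi ^ 2).

Definition hn (h : R -> R) (n : nat) (p : R) : R :=
  (h (INR n + p) - h (INR n)) / (h (INR n + 1) - h (INR n)).

Definition uniform_continuation (H : nat -> nat) (h : R -> R) : Prop :=
  (forall n : nat, (1 <= n)%nat -> (0 < H n)%nat /\ (H n < H (S n))%nat) /\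
  (forall x : R, 1 <= x ->
     filterlim h (within (fun y => 1 <= y) (locally x)) (locally (h x))) /\
  (forall n : nat, (1 <= n)%nat -> h (INR n) = INR (H n)) /\
  (forall (n : nat) (p : R), (1 <= n)%nat -> 0 <= p <= 1 -> 0 <= hn h n p <= 1) /\
  (exists g : R -> R,
     (forall p : R, 0 <= p <= 1 ->
        filterlim g (within (fun q => 0 <= q <= 1) (locally p)) (locally (g p))) /\
     (forall p q : R, 0 <= p -> p < q -> q <= 1 -> g p < g q) /\
     (forall eps : R, 0 < eps -> exists N : nat, forall n : nat, (N <= n)%nat ->
        forall p : R, 0 <= p <= 1 -> Rabs (hn h n p - g p) < eps)).

(* Main.v *)
Require Import Defs.
From Stdlib Require Import Reals Lra Lia Nsatz.
From Coquelicot Require Import Coquelicot.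
Open Scope R_scope.

Lemma sqrt5_sq : sqrt 5 * sqrt 5 = 5.
Proof. apply sqrt_sqrt; lra. Qed.

Lemma sqrt5_bnd : 2.2 < sqrt 5 < 2.24.
Proof.
  pose proof sqrt5_sq. pose proof (sqrt_pos 5). nra.
Qed.

Lemma phi_sq : phi * phi = phi + 1.
Proof. unfold phi. pose proof sqrt5_sq. nra. Qed.

Lemma phi_bnd : 1.6 < phi < 1.62.
Proof. unfold phi. pose proof sqrt5_bnd. lra. Qed.

Lemma sqrt5_phi : sqrt 5 = 2 * phi - 1.
Proof. unfold phi. lra. Qed.

Lemma one_minus_cos_le (q : R) : 0 <= q <= 1 -> 1 - cos (PI * q) <= 4 * q.
Proof.
  intros Hq. pose proof PI_RGT_0 as HP. pose proof PI_4 as HP4.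
  destruct (Rle_lt_dec q (1/2)) as [h|h].
  - assert (H := cos_bound (PI*q) 0).
    unfold cos_approx, cos_term in H. simpl in H.
    assert (- PI / 2 <= PI * q) by nra.
    assert (PI * q <= PI/2) by nra.
    destruct (H H0 H1) as [H2 _].
    assert (PI*q <= 4*q) by nra.
    assert (0 <= PI*q) by nra.
    nra.
  - pose proof (COS_bound (PI*q)). lra.
Qed.


Lemma cos_shift_n (n : nat) (p : R) : cos (PI * (INR n + p)) = (-1)^n * cos (PI * p).
Proof.
  induction n.
  - simpl. f_equal; ring_simplify; f_equal; ring. 
  - rewrite S_INR. replace (PI * (INR n + 1 + p)) with (PI * (INR n + p) + PI) by ring.
    rewrite neg_cos, IHn. simpl. ring.
Qed.

Definition ee (n : nat) : R := (-1)^n / (phi^n * phi^n * phi^2).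

Lemma phi_pos : 0 < phi.
Proof. pose proof phi_bnd; lra. Qed.

Lemma Rpow_pos (p : R) : 0 < Rpower phi p.
Proof. unfold Rpower. apply exp_pos. Qed.

Lemma frakF_shift (n : nat) (p : R) :
  frakF (INR n + p) = phi / sqrt 5 * phi^n *
     (Rpower phi p + ee n * cos (PI * p) / Rpower phi p).
Proof.
  unfold frakF, ee. rewrite Ropp_plus_distr, !Rpower_plus, !Rpower_Ropp, Rpower_pow by exact phi_pos.
  rewrite cos_shift_n.
  pose proof (Rpow_pos p). pose proof phi_pos.
  assert (phi ^ n <> 0) by (apply pow_nonzero; lra).
  assert (sqrt 5 <> 0) by (pose proof (sqrt_lt_R0 5); lra).
  field. repeat split; lra.
Qed.


Lemma frakF_rec (x : R) : frakF (x + 2) = frakF (x + 1) + frakF x.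
Proof.
  unfold frakF.
  rewrite !Ropp_plus_distr, !Rpower_plus, !Rpower_Ropp.
  rewrite Rpower_1 by exact phi_pos.
  assert (E2 : Rpower phi 2 = phi^2).
  { replace 2 with (INR 2) by (simpl; ring). apply Rpower_pow, phi_pos. }
  rewrite E2.
  replace (PI * (x + 2)) with (PI * x + 2 * PI) by ring.
  replace (PI * (x + 1)) with (PI * x + PI) by ring.
  rewrite cos_plus, cos_2PI, sin_2PI, neg_cos.
  set (T := Rpower phi x). set (C := cos (PI * x)). set (U := / T).
  pose proof phi_pos. pose proof phi_sq. pose proof phi_bnd.
  rewrite <- !Rmult_plus_distr_l. f_equal.
  assert (Hi : phi * / phi = 1) by (field; lra).
  set (ip := / phi) in *.
  replace (/ phi ^ 2) with (ip * ip) by (unfold ip; field; lra).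
  assert (Hq : ip * ip = 1 - ip).
  { apply Rmult_eq_reg_l with (phi*phi); [|nra].
    replace (phi*phi*(ip*ip)) with ((phi*ip)*(phi*ip)) by ring. rewrite Hi.
    replace (phi*phi*(1-ip)) with (phi*phi - phi*(phi*ip)) by ring. rewrite Hi. lra. }
  rewrite Hq. replace (phi^2) with (phi*phi) by ring. rewrite H0. ring.
Qed.


Lemma Fib_SSS m : Fib (S (S (S m))) = (Fib (S (S m)) + Fib (S m))%nat.
Proof. reflexivity. Qed.

Lemma Fib_inc m : (0 < Fib (S m))%nat /\ (Fib (S m) < Fib (S (S m)))%nat.
Proof.
  induction m.
  - simpl. lia.
  - rewrite Fib_SSS. lia.
Qed.

Lemma frakF_1 : frakF 1 = 1.
Proof.
  unfold frakF. rewrite Rpower_Ropp, Rpower_1 by exact phi_pos.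
  rewrite Rmult_1_r, cos_PI, sqrt5_phi.
  pose proof phi_sq. pose proof phi_bnd.
  field_simplify; [|split; lra].
  assert (E : phi ^ 4 - 1 = 2 * phi ^ 3 - phi ^ 2) by (clear H0; set (a := phi) in *; clearbody a; simpl; nsatz).
  rewrite E. field. nra.
Qed.

Lemma frakF_2 : frakF 2 = 2.
Proof.
  unfold frakF. rewrite Rpower_Ropp.
  assert (E2 : Rpower phi 2 = phi^2).
  { replace 2 with (INR 2) by (simpl; ring). apply Rpower_pow, phi_pos. }
  rewrite E2.
  replace (PI * 2) with (2 * PI) by ring.
  rewrite cos_2PI, sqrt5_phi.
  pose proof phi_sq. pose proof phi_bnd.
  field_simplify; [|split; lra].
  assert (E : phi ^ 6 + 1 = 2 * (2 * phi ^ 4 - phi ^ 3)) by (clear H0 E2; set (a := phi) in *; clearbody a; simpl; nsatz).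
  rewrite E. field. 
  assert (E' : 2 * phi ^ 4 - phi ^ 3 = 4*phi+3) by (clear H0 E2 E; set (a := phi) in *; clearbody a; simpl; nsatz).
  rewrite E'. lra.
Qed.

Lemma frakF_Fib_aux m :
  frakF (INR (S m)) = INR (Fib (S m)) /\ frakF (INR (S (S m))) = INR (Fib (S (S m))).
Proof.
  induction m.
  - simpl. split. replace (0+1) with 1 by ring. rewrite frakF_1. ring.
    replace (1+1) with 2 by ring. rewrite frakF_2. ring.
  - destruct IHm as [H1 H2]. split; [exact H2|].
    rewrite Fib_SSS, plus_INR.
    replace (INR (S (S (S m)))) with (INR (S m) + 2) by (rewrite !S_INR; ring).
    rewrite frakF_rec. rewrite <- H1, <- H2. rewrite (S_INR (S m)). reflexivity.
Qed.

Lemma frakF_Fib n : (1 <= n)%nat -> frakF (INR n) = INR (Fib n).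
Proof.
  intros Hn. destruct n; [lia|]. apply frakF_Fib_aux.
Qed.


Definition NN (e p : R) := (Rpower phi p - 1) + e * (cos (PI * p) / Rpower phi p - 1).
Definition DD (e : R) := (phi - 1) - e * (1 + / phi).

Lemma DD_pos e : Rabs e <= / phi^4 -> 0.37 <= DD e.
Proof.
  intros He. unfold DD. pose proof phi_bnd as Hb. pose proof phi_sq.
  assert (Hi : / phi = phi - 1).
  { apply Rmult_eq_reg_l with phi; [|lra]. rewrite Rinv_r by lra. nra. }
  assert (phi^4 = 3*phi+2) by (simpl; nra).
  rewrite H0 in He. rewrite Hi.
  assert (/ (3*phi+2) <= / 6.8) by (apply Rinv_le_contravar; lra).
  apply Rabs_le_between in He. nra.
Qed.

Lemma hn_formula n p : Rabs (ee n) <= / phi^4 ->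
  hn frakF n p = NN (ee n) p / DD (ee n).
Proof.
  intros He. pose proof (DD_pos _ He).
  unfold hn. rewrite !frakF_shift.
  rewrite <- (Rplus_0_r (INR n)). rewrite frakF_shift.
  rewrite Rmult_0_r, cos_0, Rpower_O, Rpower_1 by exact phi_pos.
  rewrite (Rmult_1_r PI), cos_PI.
  unfold NN.
  pose proof phi_bnd. pose proof (Rpow_pos p).
  assert (phi ^ n <> 0) by (apply pow_nonzero; lra).
  assert (sqrt 5 <> 0) by (pose proof (sqrt_lt_R0 5); lra).
  assert (0 < DD (ee n)) by lra. unfold DD in *. field. repeat split; try lra.
  - replace ((phi - 1) * phi - ee n * (phi + 1)) with (phi * (phi - 1 - ee n * (1 + / phi))) by (field; lra).
    apply Rmult_integral_contrapositive; split; lra.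
  - replace (phi ^ n * (phi * phi + ee n * -1) - phi * phi ^ n * (1 + ee n)) with (phi^n * (phi * (phi - 1 - ee n * (1 + / phi)))) by (field; lra).
    apply Rmult_integral_contrapositive; split; [auto|].
    apply Rmult_integral_contrapositive; split; lra.
Qed.


Lemma phi_inv : / phi = phi - 1.
Proof.
  pose proof phi_bnd. pose proof phi_sq.
  apply Rmult_eq_reg_l with phi; [|lra]. rewrite Rinv_r by lra. nra.
Qed.

Lemma ln_phi_lb : 0.375 <= ln phi.
Proof.
  pose proof (exp_ineq1_le (- ln phi)). rewrite exp_Ropp, exp_ln in H by exact phi_pos.
  rewrite phi_inv in H. pose proof phi_bnd. lra.
Qed.

Lemma Rpow_lin (p : R) : 0 <= p -> 1 + 0.375 * p <= Rpower phi p.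
Proof.
  intros Hp. unfold Rpower. pose proof (exp_ineq1_le (p * ln phi)). pose proof ln_phi_lb. nra.
Qed.

Lemma Rpow_le_phi (p : R) : p <= 1 -> Rpower phi p <= phi.
Proof.
  intros. rewrite <- (Rpower_1 phi) at 2 by exact phi_pos. apply Rle_Rpower; auto.
  pose proof phi_bnd; lra.
Qed.

Lemma cos_sym p : cos (PI * p) = - cos (PI * (1 - p)).
Proof.
  replace (PI * p) with (- (PI * (1 - p)) + PI) by ring. rewrite neg_cos, cos_neg. ring.
Qed.

Lemma range_generic (e p : R) : 0 <= p <= 1 ->
  (0 < e <= / phi^6 \/ - / phi^4 <= e <= 0) ->
  0 <= NN e p / DD e <= 1.
Proof.
  intros Hp He.
  assert (Hea : Rabs e <= / phi^4).
  { pose proof phi_bnd.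
    assert (/ phi^6 <= / phi^4).
    { apply Rinv_le_contravar. apply pow_lt; lra.
      replace (phi^6) with (phi^4 * (phi*phi)) by ring. 
      assert (0 < phi^4) by (apply pow_lt; lra).
      rewrite <- (Rmult_1_r (phi^4)) at 1. apply Rmult_le_compat_l; nra. }
    apply Rabs_le; lra. }
  pose proof (DD_pos _ Hea) as HD.
  pose proof phi_bnd as Hb. pose proof phi_inv as Hi.
  assert (Hphi4 : phi^4 = 3*phi+2) by (pose proof phi_sq; simpl; nra).
  assert (Hphi6 : phi^6 = 8*phi+5) by (pose proof phi_sq; simpl; nra).
  rewrite Hphi4, Hphi6 in He.
  assert (/ (3*phi+2) <= / 6.8) by (apply Rinv_le_contravar; lra).
  assert (/ (8*phi+5) <= / 17.8) by (apply Rinv_le_contravar; lra).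
  set (t := Rpower phi p). set (c := cos (PI * p)).
  set (s := Rpower phi (1 - p)).
  assert (Hts : t * s = phi).
  { unfold t, s. rewrite <- Rpower_plus. replace (p + (1-p)) with 1 by ring. apply Rpower_1, phi_pos. }
  assert (Ht1 : 1 + 0.375 * p <= t) by (apply Rpow_lin; lra).
  assert (Hs1 : 1 + 0.375 * (1-p) <= s) by (apply Rpow_lin; lra).
  assert (Htp : t <= phi) by (apply Rpow_le_phi; lra).
  assert (Hc1 : 1 - c <= 4 * p) by (apply one_minus_cos_le; lra).
  assert (Hc2 : 1 + c <= 4 * (1-p)).
  { unfold c. rewrite cos_sym. pose proof (one_minus_cos_le (1-p)). lra. }
  assert (Hc3 : -1 <= c <= 1) by apply COS_bound.
  assert (Htpos : 0 < t) by apply Rpow_pos.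
  unfold NN, DD in *. fold t. fold c.
  split.
  - apply Rdiv_le_0_compat; [|lra].
    assert (t * ((t - 1) + e * (c / t - 1)) = (t - e) * (t - 1) - e * (1 - c)) by (field; lra).
    assert (0 <= t * ((t - 1) + e * (c / t - 1))).
    { rewrite H1. destruct He as [He|He]; nra. }
    nra.
  - cut (t - 1 + e * (c / t - 1) <= phi - 1 - e * (1 + / phi)).
    { intro HN. apply (Rmult_le_reg_r (phi - 1 - e * (1 + / phi))); [lra|].
      unfold Rdiv. rewrite Rmult_assoc, Rinv_l by lra. lra. }
    assert (t * (phi - 1 - e * (1 + / phi) - (t - 1 + e * (c / t - 1))) = t * (phi - t) - e * (t * (phi - 1) + c)) by (rewrite Hi; field; lra).
    assert (HH : 0 <= t * (phi - 1 - e * (1 + / phi) - (t - 1 + e * (c / t - 1)))).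
    { rewrite H1. destruct He as [He|He].
      - assert (t * (phi - 1) + c <= 4 * (1 - p)) by nra.
        assert (phi - t = t * (s - 1)) by nra.
        nra.
      - assert (-e * (t * (phi - 1) + c) >= -e * (t * (phi - 1) - 1)) by nra.
        assert (t * (phi - 1) - 1 = (t - phi) * (phi - 1)) by (pose proof phi_sq; nra).
        assert (0 <= (phi - t) * (t + e * (phi - 1))).
        { apply Rmult_le_pos; nra. }
        nra. }
    assert (0 <= phi - 1 - e * (1 + / phi) - (t - 1 + e * (c / t - 1))).
    { apply (Rmult_le_reg_l t); [lra|]. rewrite Rmult_0_r. exact HH. }
    lra.
Qed.


Definition gg (p : R) := (Rpower phi p - 1) / (phi - 1).

Lemma ee_cases n : (1 <= n)%nat ->
  (0 < ee n <= / phi^6 \/ - / phi^4 <= ee n <= 0).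
Proof.
  intros Hn. pose proof phi_bnd as Hb. unfold ee.
  assert (Hp1 : 1 <= phi) by lra.
  destruct (Nat.Even_or_Odd n) as [[k Hk]|[k Hk]]; subst n.
  - left. rewrite pow_1_even.
    assert (phi^2 <= phi^(2*k)) by (apply Rle_pow; lia || lra).
    assert (0 < phi^2) by (apply pow_lt; lra).
    split.
    + apply Rdiv_lt_0_compat; [lra|]. apply Rmult_lt_0_compat; [|lra]. nra.
    + unfold Rdiv. rewrite Rmult_1_l. apply Rinv_le_contravar. apply pow_lt; lra.
      replace (phi^6) with (phi^2 * phi^2 * phi^2) by ring.
      apply Rmult_le_compat_r; [lra|]. apply Rmult_le_compat; lra.
  - right. replace (2 * k + 1)%nat with (S (2*k)) by lia. rewrite pow_1_odd.
    assert (phi^1 <= phi^(S (2*k))) by (apply Rle_pow; lia || lra).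
    assert (0 < phi^(S (2 * k))) by (apply pow_lt; lra).
    assert (0 < phi^2) by (apply pow_lt; lra).
    assert (0 < phi^4) by (apply pow_lt; lra).
    simpl pow in H at 1. rewrite Rmult_1_r in H.
    set (X := phi ^ S (2 * k) * phi ^ S (2 * k) * phi ^ 2).
    assert (HX : 0 < X) by (unfold X; apply Rmult_lt_0_compat; [|lra]; nra).
    replace (-1 / X) with (- / X) by (field; lra).
    split.
    + apply Ropp_le_contravar. apply Rinv_le_contravar; [assumption|].
      unfold X. replace (phi^4) with (phi * phi * phi^2) by ring.
      apply Rmult_le_compat_r; [lra|]. apply Rmult_le_compat; lra.
    + assert (0 < / X) by (apply Rinv_0_lt_compat; lra). lra.
Qed.

Lemma ee_abs n : Rabs (ee n) <= (/ phi)^n.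
Proof.
  pose proof phi_bnd as Hb. unfold ee. rewrite Rabs_div, pow_1_abs, Rabs_right.
  2:{ assert (0 < phi^n) by (apply pow_lt; lra). assert (0 < phi^2) by (apply pow_lt; lra). nra. }
  rewrite pow_inv. unfold Rdiv. rewrite Rmult_1_l. apply Rinv_le_contravar.
  apply pow_lt; lra.
  assert (1 <= phi^n) by (apply pow_R1_Rle; lra).
  assert (1 <= phi^2) by (apply pow_R1_Rle; lra).
  assert (phi ^ n <= phi ^n * phi^n) by nra.
  nra. assert (0 < phi^n) by (apply pow_lt; lra). assert (0 < phi^2) by (apply pow_lt; lra). assert (0 < phi^n*phi^n*phi^2) by (apply Rmult_lt_0_compat; [apply Rmult_lt_0_compat|]; lra). lra.
Qed.

Lemma unif_generic (e p : R) : 0 <= p <= 1 -> Rabs e <= / phi^4 ->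
  Rabs (NN e p / DD e - gg p) <= 12 * Rabs e.
Proof.
  intros Hp He. pose proof (DD_pos _ He) as HD.
  pose proof phi_bnd as Hb. pose proof phi_inv as Hi.
  set (t := Rpower phi p). set (c := cos (PI * p)).
  assert (Ht1 : 1 <= t) by (pose proof (Rpow_lin p); unfold t; lra).
  assert (Htp : t <= phi) by (apply Rpow_le_phi; lra).
  assert (Hc3 : -1 <= c <= 1) by apply COS_bound.
  unfold NN, DD, gg in *. fold t c.
  rewrite Hi in *.
  set (D := phi - 1 - e * (1 + (phi - 1))) in *.
  set (B := c / t - 1).
  assert (HB : -2 <= B <= 0).
  { unfold B. split.
    - assert (-1 <= c / t). { apply Rmult_le_reg_r with t; [lra|]. unfold Rdiv. rewrite Rmult_assoc, Rinv_l by lra. nra. }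
      lra.
    - assert (c / t <= 1). { apply Rmult_le_reg_r with t; [lra|]. unfold Rdiv. rewrite Rmult_assoc, Rinv_l by lra. nra. }
      lra. }
  assert (E : (t - 1 + e * B) / D - (t - 1) / (phi - 1)
              = e * ((B * (phi - 1) + (t - 1) * phi) / (D * (phi - 1)))).
  { unfold D. field. split; [lra|]. unfold D in HD. lra. }
  rewrite E, Rabs_mult, Rmult_comm. apply Rmult_le_compat_r; [apply Rabs_pos|].
  apply Rabs_le. 
  assert (0 < D * (phi - 1)) by (apply Rmult_lt_0_compat; lra).
  split.
  - apply (Rmult_le_reg_r (D * (phi - 1))); [lra|].
    unfold Rdiv. rewrite Rmult_assoc, Rinv_l by lra. nra.
  - apply (Rmult_le_reg_r (D * (phi - 1))); [lra|].
    unfold Rdiv. rewrite Rmult_assoc, Rinv_l by lra. nra.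
Qed.


Lemma ee_abs4 n : (1 <= n)%nat -> Rabs (ee n) <= / phi^4.
Proof.
  intros Hn. pose proof phi_bnd.
  assert (/ phi^6 <= / phi^4).
  { apply Rinv_le_contravar. apply pow_lt; lra.
    replace (phi^6) with (phi^4 * (phi*phi)) by ring.
    assert (0 < phi^4) by (apply pow_lt; lra).
    rewrite <- (Rmult_1_r (phi^4)) at 1. apply Rmult_le_compat_l; nra. }
  destruct (ee_cases n Hn); apply Rabs_le; lra.
Qed.

Lemma cont_within (f : R -> R) (D : R -> Prop) (x : R) :
  ex_derive f x -> filterlim f (within D (locally x)) (locally (f x)).
Proof.
  intros H. apply (filterlim_filter_le_1 (F := locally x)).
  - apply filter_le_within.
  - exact (ex_derive_continuous f x H).
Qed.

Theorem lemma5p2 : uniform_continuation Fib frakF.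
Proof.
  pose proof phi_bnd as Hb.
  split; [|split; [|split; [|split]]].
  - intros n Hn. destruct n; [lia|]. apply Fib_inc.
  - intros x _. apply cont_within. unfold frakF, Rpower. auto_derive. exact I.
  - exact frakF_Fib.
  - intros n p Hn Hp. rewrite hn_formula by (apply ee_abs4; exact Hn).
    apply range_generic; [exact Hp|]. apply ee_cases; exact Hn.
  - exists gg. split; [|split].
    + intros p _. apply cont_within. unfold gg, Rpower. auto_derive. lra.
    + intros p q Hp Hpq Hq. unfold gg. unfold Rdiv.
      apply Rmult_lt_compat_r. apply Rinv_0_lt_compat; lra.
      pose proof (Rpower_lt phi p q ltac:(lra) Hpq). lra.
    + intros eps Heps.
      assert (Hr : Rabs (/ phi) < 1).
      { rewrite phi_inv, Rabs_right; lra. }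
      destruct (pow_lt_1_zero (/ phi) Hr (eps / 12) ltac:(lra)) as [N HN].
      exists (Nat.max N 1). intros n Hn p Hp.
      assert (H1 : (1 <= n)%nat) by lia.
      rewrite hn_formula by (apply ee_abs4; exact H1).
      eapply Rle_lt_trans; [apply unif_generic; [exact Hp| apply ee_abs4; exact H1]|].
      pose proof (ee_abs n).
      assert (Rabs ((/ phi)^n) < eps / 12) by (apply HN; lia).
      rewrite Rabs_right in H0.
      2:{ apply Rle_ge, pow_le. rewrite phi_inv; lra. }
      lra.
Qed.
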